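(* For all $\alpha,\beta\in[0,1]$, the star product $M_{\beta,\alpha}\ast M_{\alpha,\beta}$ of Marshall–Olkin copulas is a lower semilinear copula.
   Context: A (bivariate) copula is a distribution function on $[0,1]^2$ with uniform marginals. For $\alpha,\beta\in[0,1]$ the Marshall–Olkin copula is $M_{\alpha,\beta}(u,v)=\min\{u^{1-\alpha}v,\,uv^{1-\beta}\}$. The star product of copulas is $(A\ast B)(x,y)=\int_{[0,1]}\partial_2A(x,s)\,\partial_1B(s,y)\,ds$. A copula $C$ is lower semilinear if for every $x\in(0,1]$ the mappings $t\mapsto C(t,x)$ and $t\mapsto C(x,t)$ are linear on $[0,x]$. *)

(* Defs.v *)
From HB Require Import structures.
From mathcomp Require Import all_boot all_order all_algebra.
From mathcomp Require Import all_classical all_reals all_analysis.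
Set Implicit Arguments. Unset Strict Implicit. Unset Printing Implicit Defensive.
Import Order.TTheory GRing.Theory Num.Theory.
Import numFieldNormedType.Exports.
Local Open Scope classical_set_scope.
Local Open Scope ring_scope.

Section Copulas.
Variable R : realType.

Definition in01 (x : R) : Prop := 0 <= x <= 1.

(* A bivariate copula, given as a function R -> R -> R of which only the
   restriction to [0,1]^2 matters: grounded, uniform margins, 2-increasing
   (equivalently: a distribution function on [0,1]^2 with uniform marginals). *)
Definition is_copula (C : R -> R -> R) : Prop :=
  [/\ (forall u, in01 u -> C u 0 = 0 /\ C 0 u = 0),
      (forall u, in01 u -> C u 1 = u /\ C 1 u = u) &
      (forall u1 u2 v1 v2, in01 u1 -> in01 u2 -> in01 v1 -> in01 v2 ->
         u1 <= u2 -> v1 <= v2 ->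
         0 <= C u2 v2 - C u2 v1 - C u1 v2 + C u1 v1)].

Definition MO (a b : R) : R -> R -> R :=
  fun u v => Num.min (powR u (1 - a) * v) (u * powR v (1 - b)).

(* partial derivatives (total functions: derive1 gives the limit of the
   difference quotients, which is the derivative wherever it exists) *)
Definition d1 (C : R -> R -> R) (x y : R) : R := derive1 (fun t => C t y) x.
Definition d2 (C : R -> R -> R) (x y : R) : R := derive1 (fun t => C x t) y.

Definition star (A B : R -> R -> R) : R -> R -> R :=
  fun x y => Rintegral (@lebesgue_measure R) `[0, 1]%classic
               (fun s => d2 A x s * d1 B s y).

Definition lower_semilinear (C : R -> R -> R) : Prop :=
  forall x, 0 < x <= 1 ->
    (exists m c : R, forall t, 0 <= t <= x -> C t x = m * t + c) /\
    (exists m c : R, forall t, 0 <= t <= x -> C x t = m * t + c).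

End Copulas.

(* Main.v *)
Require Import Defs.
From HB Require Import structures.
From mathcomp Require Import all_boot all_order all_algebra.
From mathcomp Require Import all_classical all_reals all_analysis.
From mathcomp Require Import ring lra.
From mathcomp Require Import measurable_realfun.
Set Implicit Arguments. Unset Strict Implicit. Unset Printing Implicit Defensive.
Import Order.TTheory GRing.Theory Num.Theory.
Import numFieldNormedType.Exports.
Local Open Scope classical_set_scope.
Local Open Scope ring_scope.

Section S.
Variable R : realType.
Variables a b : R.
Hypothesis ha : 0 <= a <= 1.
Hypothesis hb : 0 <= b <= 1.

Definition cc (x : R) := powR x (1 - b).
Definition kk (x : R) := if a == 0 then 0 else powR x (b / a).
Definition psi (x s : R) := if s < kk x then cc x else x * ((1 - a) * powR s (1 - a - 1)).

Lemma powR_pos (x p : R) : 0 < x -> powR x p = expR (p * ln x).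
Proof. by move=> x0; rewrite /powR gt_eqF. Qed.

Lemma powR_le1 (x p : R) : 0 <= x <= 1 -> 0 <= p -> powR x p <= 1.
Proof.
move=> /andP[x0 x1] p0; have [->|xn0] := eqVneq x 0.
  by rewrite /powR eqxx; case: (p == 0).
rewrite powR_pos; last by rewrite lt_neqAle eq_sym xn0.
rewrite -expR0 ler_expR mulr_ge0_le0 // ln_le0 //.
Qed.

Lemma kk_ge0 x : 0 <= kk x.
Proof. by rewrite /kk; case: ifP => // _; exact: powR_ge0. Qed.

Lemma kk_le1 x : 0 <= x <= 1 -> kk x <= 1.
Proof.
move=> hx; rewrite /kk; case: ifP => // _; apply: powR_le1 => //.
case/andP: ha => a0 _; case/andP: hb => b0 _; exact: divr_ge0.
Qed.

Lemma powR_mono (p x y : R) : 0 <= p -> 0 <= x -> x <= y -> powR x p <= powR y p.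
Proof.
move=> p0 x0 xy; apply: ge0_ler_powR => //; rewrite nnegrE //; exact: le_trans xy.
Qed.

Lemma kk_mono x y : 0 <= x -> x <= y -> kk x <= kk y.
Proof.
move=> x0 xy; rewrite /kk; case: ifP => // _; apply: powR_mono => //.
case/andP: ha => a0 _; case/andP: hb => b0 _; exact: divr_ge0.
Qed.

Lemma cc_ge0 x : 0 <= cc x.
Proof. exact: powR_ge0. Qed.

Lemma cc_le1 x : 0 <= x <= 1 -> cc x <= 1.
Proof. move=> hx; apply: powR_le1 => //; case/andP: hb => _ b1; lra. Qed.

Lemma cc_mono x y : 0 <= x -> x <= y -> cc x <= cc y.
Proof. move=> x0 xy; apply: powR_mono => //; case/andP: hb => _ b1; lra. Qed.

Lemma kink x : 0 <= x <= 1 -> cc x * kk x = x * powR (kk x) (1 - a).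
Proof.
move=> /andP[x0 x1]; rewrite /kk /cc.
have [a0|an0] := eqVneq a 0.
  by rewrite mulr0 a0 subr0 powR0 ?oner_neq0 // mulr0.
have [->|xn0] := eqVneq x 0.
  rewrite mul0r; have [b1|bn1] := eqVneq b 1.
    rewrite b1 (@powR0 _ (1 / a)) ?mulr0 //; by rewrite mul1r invr_eq0.
  rewrite (@powR0 _ (1 - b)) ?mul0r // subr_eq0 eq_sym //.
have xp : 0 < x by rewrite lt_neqAle eq_sym xn0.
rewrite !powR_pos ?expR_gt0 // expRK -{3}(lnK xp) -!expRD.
congr expR; field; exact: an0.
Qed.


Lemma ha0 : 0 <= a. Proof. by case/andP: ha. Qed.
Lemma ha1 : a <= 1. Proof. by case/andP: ha. Qed.
Lemma hb0 : 0 <= b. Proof. by case/andP: hb. Qed.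
Lemma hb1 : b <= 1. Proof. by case/andP: hb. Qed.

Lemma log_ineq (x t : R) : 0 < x -> 0 < t -> a != 0 ->
  (t <= kk x) = (cc x * t <= x * powR t (1 - a)).
Proof.
move=> xp tp an0; have ap : 0 < a by rewrite lt_neqAle eq_sym an0 ha0.
have -> : cc x * t = expR ((1-b)*ln x + ln t) by rewrite expRD lnK // /cc powR_pos.
have -> : x * powR t (1-a) = expR (ln x + (1-a) * ln t) by rewrite expRD lnK // powR_pos.
have -> : kk x = expR (b/a * ln x) by rewrite /kk (negbTE an0) powR_pos.
rewrite -{1}(lnK tp) !ler_expR.
rewrite -(ler_pM2l ap) (_ : a * (b / a * ln x) = b * ln x); last by field; exact: an0.
apply/idP/idP => h; nra.
Qed.

Lemma br1 x t : 0 <= x <= 1 -> 0 < t -> t <= kk x -> cc x * t <= x * powR t (1 - a).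
Proof.
move=> /andP[x0 x1] tp tk.
have [a0|an0] := eqVneq a 0.
  by move: tk; rewrite /kk a0 eqxx => tk; exfalso; lra.
have [xz|xn0] := eqVneq x 0.
  move: tk; rewrite xz /kk /cc (negbTE an0) mul0r.
  have [b1|bn1] := eqVneq b 1.
    rewrite b1 powR0 ?mul1r ?invr_eq0 // => tk; exfalso; lra.
  by move=> _; rewrite (@powR0 _ (1 - b)) ?mul0r // subr_eq0 eq_sym.
have xp : 0 < x by rewrite lt_neqAle eq_sym xn0.
by rewrite -log_ineq.
Qed.

Lemma br2 x t : 0 <= x <= 1 -> 0 < t -> kk x <= t -> x * powR t (1 - a) <= cc x * t.
Proof.
move=> /andP[x0 x1] tp tk.
have [xz|xn0] := eqVneq x 0.
  by rewrite xz mul0r mulr_ge0 ?cc_ge0 // ltW.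
have xp : 0 < x by rewrite lt_neqAle eq_sym xn0.
have [a0|an0] := eqVneq a 0.
  rewrite a0 subr0 powRr1 ?(ltW tp) // ler_pM2r // /cc.
  apply: ger1_powR; rewrite ?xp ?x1 //; have := hb0; lra.
have [tk'|] := eqVneq t (kk x).
  by rewrite tk' kink ?x0 ?x1 //.
move=> tnk; have tlt : kk x < t by rewrite lt_neqAle eq_sym tnk tk.
have h := log_ineq xp tp an0; move: tlt; rewrite ltNge h -ltNge => h'.
exact: ltW.
Qed.


Lemma MOsym t y : MO a b t y = MO b a y t.
Proof. by rewrite /MO (mulrC y) (mulrC (powR y (1 - b))) minC. Qed.

Lemma d2psi x s : 0 <= x <= 1 -> 0 < s -> s != kk x -> d2 (MO b a) x s = psi x s.
Proof.
move=> hx sp snk; rewrite /d2 /psi.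
have [sk|ks] := ltP s (kk x).
  have E : \forall t \near s, MO b a x t = cc x * t.
    near=> t; rewrite /MO min_l //; apply: br1 => //.
      by near: t; exact: lt_nbhsr sp.
    by apply: ltW; near: t; exact: lt_nbhsl sk.
  rewrite derive1E (near_eq_derive _ E) -derive1E.
  by rewrite (derive1Ml (f := id)) // derive1_id mulr1.
have ks' : kk x < s by rewrite lt_neqAle eq_sym snk ks.
have E : \forall t \near s, MO b a x t = x * powR t (1 - a).
  near=> t; rewrite /MO min_r //; apply: br2 => //.
    by near: t; exact: lt_nbhsr sp.
  by apply: ltW; near: t; exact: lt_nbhsr ks'.
rewrite derive1E (near_eq_derive _ E) -derive1E.
rewrite (derive1Ml (f := fun t => powR t (1 - a))) //.
  by rewrite powR_derive1 // in_itv /= sp.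
by apply: derivable_powR; rewrite in_itv /= sp.
Unshelve. all: by end_near. Qed.


Lemma powR_split s : 0 < s -> powR s (1 - a) = s * powR s (1 - a - 1).
Proof.
move=> sp; rewrite !powR_pos // -{2}(lnK sp) -expRD; congr expR.
by ring.
Qed.

Lemma psi_ge0 x s : 0 <= x -> 0 <= psi x s.
Proof.
move=> x0; rewrite /psi; case: ifP => _; first exact: cc_ge0.
apply: mulr_ge0 => //; apply: mulr_ge0; last exact: powR_ge0.
by have := ha1; lra.
Qed.

Lemma psi_le_cc x s : 0 <= x <= 1 -> 0 < s -> psi x s <= cc x.
Proof.
move=> hx sp; rewrite /psi; case: ifPn => //; rewrite -leNgt => ks.
have h := br2 hx sp ks; rewrite powR_split // in h.
have P0 := @powR_ge0 _ s (1 - a - 1).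
have h' : x * powR s (1 - a - 1) <= cc x.
  by rewrite -(ler_pM2r sp); move: h; rewrite mulrA (mulrC x s) -mulrA mulrC.
case/andP: hx => x0 _; have := mulr_ge0 ha0 (mulr_ge0 x0 P0); lra.
Qed.

Lemma psi_le1 x s : 0 <= x <= 1 -> 0 < s -> psi x s <= 1.
Proof. by move=> hx sp; apply: le_trans (psi_le_cc hx sp) (cc_le1 hx). Qed.

Lemma psi_mono x1 x2 s : 0 <= x1 -> x1 <= x2 -> x2 <= 1 -> 0 < s ->
  psi x1 s <= psi x2 s.
Proof.
move=> x10 x12 x21 sp.
have hx1 : 0 <= x1 <= 1 by rewrite x10 /=; exact: le_trans x12 x21.
have hx2 : 0 <= x2 <= 1 by rewrite (le_trans x10 x12).
have kle := kk_mono x10 x12.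
have [s1|s1] := ltP s (kk x1).
  by rewrite /psi s1 (lt_le_trans s1 kle); exact: cc_mono.
have [s2|s2] := ltP s (kk x2).
  rewrite {2}/psi s2; apply: le_trans (psi_le_cc hx1 sp) _; exact: cc_mono.
rewrite /psi ltNge s1 /= ltNge s2 /=; apply: ler_wpM2r => //.
apply: mulr_ge0; last exact: powR_ge0; by have := ha1; lra.
Qed.

Lemma psi0 s : 0 < s -> psi 0 s = 0.
Proof.
move=> sp; rewrite /psi; case: ifPn; last by rewrite mul0r.
have [b1|bn1] := eqVneq b 1.
  rewrite /kk; case: ifP => [_|/negbT an0]; first by rewrite ltNge (ltW sp).
  by rewrite b1 powR0 ?mul1r ?invr_eq0 // ltNge (ltW sp).
by rewrite /cc powR0 // subr_eq0 eq_sym.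
Qed.

Lemma psi1 s : 0 < s < 1 -> psi 1 s = 1.
Proof.
case/andP=> sp s1; rewrite /psi /kk; have [a0|an0] := eqVneq a 0.
  by rewrite a0 ltNge (ltW sp) /= subr0 subrr powRr0 !mul1r.
by rewrite powR1 s1 /cc powR1.
Qed.

Lemma psi_head x s : s < kk x -> psi x s = cc x.
Proof. by rewrite /psi => ->. Qed.

Lemma psi_tail t x s : 0 <= t -> t <= x -> 0 < x -> kk x < s -> psi t s = t / x * psi x s.
Proof.
move=> t0 tx xp ks; rewrite /psi (ltNge s (kk x)) (ltW ks) /=.
rewrite (ltNge s (kk t)) (le_trans (kk_mono t0 tx) (ltW ks)) /=.
by field; rewrite gt_eqF.
Qed.

Lemma measurable_psi x : measurable_fun setT (psi x).
Proof.
rewrite /psi; apply: measurable_fun_ifT.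
- by apply: measurable_fun_ltr.
- by [].
- by apply: measurable_funM => //; apply: measurable_funM.
Qed.


Local Notation mu := (@lebesgue_measure R).

Lemma meas_setD1 (D : set R) (f : R -> R) p : measurable D ->
  measurable_fun (D `\ p) f -> measurable_fun D f.
Proof.
move=> mD mf.
have -> : D = (D `\ p) `|` (D `&` [set p]).
  apply/seteqP; split => [z Dz|z [[]//|[]//]].
  have [zp|zp] := eqVneq z p; [by right; split | left; split => //= zp'].
  by move: zp; rewrite zp' eqxx.
apply/measurable_funU => //.
- by apply: measurableD.
- by apply: measurableI.
split => //; apply: (measurable_funS (E := [set p])) => //; last first.
  exact: measurable_fun_set1.
Qed.

Lemma except_list (S : seq R) : forall (D : set R) (f g : R -> R), measurable D ->
  measurable_fun D g -> (forall s, D s -> s \notin S -> f s = g s) ->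
  measurable_fun D f /\
  (\int[mu]_(x in D) (f x)%:E = \int[mu]_(x in D) (g x)%:E)%E.
Proof.
elim: S => [|p S IH] D f g mD mg fg.
  split; first by apply: eq_measurable_fun mg => z /[!inE] Dz; rewrite fg.
  by apply: eq_integral => z /[!inE] Dz; rewrite fg.
have mD' : measurable (D `\ p) by apply: measurableD.
have mg' : measurable_fun (D `\ p) g by apply: measurable_funS mg.
have fg' : forall s, (D `\ p) s -> s \notin S -> f s = g s.
  move=> s [Ds sp] sS; apply: fg => //.
  by rewrite in_cons negb_or sS andbT; apply/eqP => sp'; apply: sp.
have [mf' e'] := IH (D `\ p) f g mD' mg' fg'.
split; first exact: meas_setD1 mf'.
rewrite -(@integral_setD1 _ (EFin \o f) p D) //; last exact/measurable_EFinP.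
rewrite -(@integral_setD1 _ (EFin \o g) p D) //; last exact/measurable_EFinP.
Qed.

Lemma Rexcept (S : seq R) (D : set R) (f g : R -> R) : measurable D ->
  measurable_fun D g -> (forall s, D s -> s \notin S -> f s = g s) ->
  \int[mu]_(x in D) f x = \int[mu]_(x in D) g x.
Proof. by move=> mD mg fg; rewrite /Rintegral (except_list mD mg fg).2. Qed.

Lemma int_bndM (M : R) (f : R -> R) (D : set R) : measurable D -> D `<=` `]0, 1] ->
  measurable_fun setT f -> (forall s, D s -> `|f s| <= M) ->
  mu.-integrable D (EFin \o f).
Proof.
move=> mD D01 mf fb; apply: measurable_bounded_integrable => //.
- pose I01 : set R := `]0, 1]%classic; have h : (mu D <= mu I01)%E by apply: le_measure; rewrite ?inE //= /I01.
  apply: (le_lt_trans h).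
  by rewrite /I01 lebesgue_measure_itv /= lte_fin ltr01 oppr0 adde0 ltry.
- exact: (measurable_funS measurableT (@subsetT _ D) mf).
- exists M; split; rewrite ?num_real // => M' M1 z Dz /=.
  by rewrite (le_trans (fb z Dz)) // ltW.
Qed.

Lemma int_bnd (f : R -> R) (D : set R) : measurable D -> D `<=` `]0, 1] ->
  measurable_fun setT f -> (forall s, D s -> `|f s| <= 1) ->
  mu.-integrable D (EFin \o f).
Proof.
move=> mD D01 mf fb; apply: measurable_bounded_integrable => //.
- pose I01 : set R := `]0, 1]%classic; have h : (mu D <= mu I01)%E by apply: le_measure; rewrite ?inE //= /I01.
  apply: (le_lt_trans h).
  by rewrite /I01 lebesgue_measure_itv /= lte_fin ltr01 oppr0 adde0 ltry.
- exact: (measurable_funS measurableT (@subsetT _ D) mf).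
- exists 1; split; rewrite ?num_real // => M M1 z Dz /=.
  by rewrite (le_trans (fb z Dz)) // ltW.
Qed.

Lemma int_psipsi (x y : R) (D : set R) : 0 <= x <= 1 -> 0 <= y <= 1 -> measurable D ->
  D `<=` `]0, 1] -> mu.-integrable D (EFin \o (fun s => psi x s * psi y s)).
Proof.
move=> hx hy mD D01; apply: int_bnd => //.
  by apply: measurable_funM; apply: measurable_psi.
move=> z /D01; rewrite /= in_itv /= => /andP[zp _].
have [x0 _] := andP hx; have [y0 _] := andP hy.
rewrite ger0_norm ?mulr_ge0 ?psi_ge0 //.
rewrite -(mulr1 1); apply: ler_pM; rewrite ?psi_ge0 ?psi_le1 //.
Qed.

Lemma int_psi (x : R) (D : set R) : 0 <= x <= 1 -> measurable D ->
  D `<=` `]0, 1] -> mu.-integrable D (EFin \o psi x).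
Proof.
move=> hx mD D01; apply: int_bnd => //; first exact: measurable_psi.
move=> z /D01; rewrite /= in_itv /= => /andP[zp _].
have [x0 _] := andP hx.
by rewrite ger0_norm ?psi_ge0 ?psi_le1 //.
Qed.


Definition CC (x y : R) := \int[mu]_(s in `]0, 1]) (psi x s * psi y s).

Lemma star_eq x y : 0 <= x <= 1 -> 0 <= y <= 1 ->
  star (MO b a) (MO a b) x y = CC x y.
Proof.
move=> hx hy; rewrite /star /CC.
have e1 : forall s, d1 (MO a b) s y = d2 (MO b a) y s.
  by move=> s; rewrite /d1 /d2; congr derive1; apply/funext => t; exact: MOsym.
have mg : measurable_fun setT (fun s => psi x s * psi y s).
  by apply: measurable_funM; apply: measurable_psi.
rewrite (@Rexcept [:: 0; 1; kk x; kk y] _ _ (fun s => psi x s * psi y s)) //.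
- rewrite -Rintegral_itv_obnd_cbnd //; apply: int_psipsi => //.
- exact: measurable_funS mg.
move=> s /=; rewrite in_itv /= => /andP[s0 s1].
rewrite !in_cons !negb_or in_nil => /and5P[sn0 sn1 snx sny _].
have sp : 0 < s by rewrite lt_neqAle eq_sym sn0 s0.
by rewrite e1 !d2psi.
Qed.


Lemma derivable_cpow (c p s : R) : 0 < s -> derivable (fun u => c * powR u p) s 1.
Proof.
move=> sp; have h := @derivable_powR R 1 p s; rewrite in_itv /= sp in h.
have := derivableM (derivable_cst c s 1) (h isT).
by [].
Qed.

Lemma Rint_cst (r K : R) : 0 <= K -> \int[mu]_(s in `]0, K]) r = r * K.
Proof.
move=> K0; rewrite Rintegral_cst //.
have hm : mu (`]0, K]%classic : set R) = K%:E.
  rewrite lebesgue_measure_itv /= lte_fin.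
  have [Kp|] := ltP 0 K; first by rewrite /= oppr0 adde0.
  by move=> K0'; have -> : K = 0 by apply/eqP; rewrite eq_le K0 K0'.
congr (_ * _); exact: (congr1 fine hm).
Qed.


Lemma cont_cpow (c p s : R) : 0 < s -> {for s, continuous (fun u => c * powR u p)}.
Proof.
move=> sp; apply: differentiable_continuous; rewrite -derivable1_diffP.
exact: derivable_cpow.
Qed.

Lemma int_psi_K t K : 0 <= t <= 1 -> kk t <= K -> K <= 1 ->
  \int[mu]_(s in `]0, K]) psi t s = t * powR K (1 - a).
Proof.
move=> ht tK K1; have K0 : 0 <= K := le_trans (kk_ge0 t) tK.
have [t0 t1] := andP ht.
have [tz|tn0] := eqVneq t 0.
  rewrite tz mul0r (@eq_Rintegral _ _ _ mu _ (fun=> 0)); first by rewrite Rint_cst // mul0r.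
  by move=> s; rewrite inE /= in_itv /= => /andP[sp _]; rewrite psi0.
have [a0|an0] := eqVneq a 0.
  rewrite (@eq_Rintegral _ _ _ mu _ (fun=> t)); first by rewrite Rint_cst // a0 subr0 powRr1.
  move=> s; rewrite inE /= in_itv /= => /andP[sp _].
  by rewrite /psi /kk a0 eqxx ltNge (ltW sp) /= subr0 subrr powRr0 !mulr1.
have tp : 0 < t by rewrite lt_neqAle eq_sym tn0 t0.
set kt := kk t.
have ktp : 0 < kt by rewrite /kt /kk (negbTE an0) powR_gt0.
have I0K : mu.-integrable `]0, K] (EFin \o psi t).
  apply: int_psi => //; move=> z /=; rewrite !in_itv /= => /andP[-> zK] /=.
  exact: le_trans zK K1.
have := @Rintegral_itvB R (psi t) (BRight 0) (BRight K) kt I0K.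
rewrite !bnd_simp (ltW ktp) tK => /(_ isT isT) /eqP; rewrite subr_eq => /eqP ->.
have h1 : \int[mu]_(s in `]0, kt]) psi t s = cc t * kt.
  rewrite (@Rexcept [:: kt] _ _ (fun=> cc t)) //; first by rewrite Rint_cst // ltW.
  move=> s /=; rewrite in_itv /= => /andP[sp skt].
  rewrite in_cons in_nil orbF => skt'.
  by rewrite psi_head // lt_neqAle skt' skt.
rewrite h1.
have [ktK|ktK] := eqVneq kt K.
  rewrite -ktK set_itv_ge ?bnd_simp ?ltxx // Rintegral_set0 add0r.
  by rewrite /kt kink.
have ktK' : kt < K by rewrite lt_neqAle ktK tK.
pose f := fun s => t * (1 - a) * powR s (1 - a - 1).
pose F := fun s => t * powR s (1 - a).
have mf : measurable_fun setT f.
  by apply: measurable_funM => //; exact: measurable_powR.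
have pw : forall s, (`]kt, K]%classic : set R) s -> s \notin [:: kt] -> psi t s = f s.
  move=> s /=; rewrite in_itv /= => /andP[kts _] _.
  by rewrite /psi ltNge (ltW kts) /= /f mulrA.
rewrite (Rexcept _ (measurable_funS measurableT (@subsetT _ _) mf) pw) //.
have cf : {within `[kt, K], continuous f}.
  apply: continuous_in_subspaceT => z; rewrite inE /= in_itv /= => /andP[ktz _].
  exact: cont_cpow (lt_le_trans ktp ktz).
have If : mu.-integrable `[kt, K] (EFin \o f).
  by apply: continuous_compact_integrable => //; exact: segment_compact.
rewrite Rintegral_itv_obnd_cbnd; last first.
  by apply: integrableS If => //; apply: subset_itvr; rewrite bnd_simp.
have dF : derivable_oo_LRcontinuous F kt K.
  split.
  - move=> z; rewrite in_itv /= => /andP[ktz _].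
    exact: derivable_cpow (lt_trans ktp ktz).
  - by apply: cvg_at_right_filter; exact: cont_cpow.
  - by apply: cvg_at_left_filter; exact: cont_cpow (lt_trans ktp ktK').
have F'f : {in `]kt, K[, F^`()%classic =1 f}.
  move=> z; rewrite in_itv /= => /andP[ktz _].
  have zp : 0 < z := lt_trans ktp ktz.
  rewrite /F (derive1Ml (f := fun u => powR u (1 - a))) //.
    by rewrite powR_derive1 ?in_itv /= ?zp // /f mulrA.
  by apply: derivable_powR; rewrite in_itv /= zp.
rewrite /Rintegral (continuous_FTC2 ktK' cf dF F'f) /= /F.
have := kink ht; rewrite -/kt => ->; ring.
Qed.


Definition Lx (x : R) := cc x * powR (kk x) (1 - a) +
  (\int[mu]_(s in `]kk x, 1]) (psi x s * psi x s)) / x.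

Lemma CC_lin t x : 0 <= t -> t <= x -> 0 < x -> x <= 1 -> CC t x = t * Lx x.
Proof.
move=> t0 tx xp x1.
have hx : 0 <= x <= 1 by rewrite (ltW xp) x1.
have ht : 0 <= t <= 1 by rewrite t0 (le_trans tx x1).
set kx := kk x.
have kx0 : 0 <= kx := kk_ge0 x.
have kx1 : kx <= 1 := kk_le1 hx.
have I01 : mu.-integrable `]0, 1] (EFin \o (fun s => psi t s * psi x s)).
  exact: int_psipsi.
rewrite /CC.
have := @Rintegral_itvB R (fun s => psi t s * psi x s) (BRight 0) (BRight 1) kx I01.
rewrite !bnd_simp kx0 kx1 => /(_ isT isT) /eqP; rewrite subr_eq => /eqP ->.
have pw1 : forall s, (`]0, kx]%classic : set R) s -> s \notin [:: kx] ->
    psi t s * psi x s = psi t s * cc x.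
  move=> s /=; rewrite in_itv /= => /andP[sp skx].
  rewrite in_cons in_nil orbF => skx'.
  by rewrite (@psi_head x s) // lt_neqAle skx' skx.
have mg : measurable_fun setT (fun s => psi t s * cc x).
  by apply: measurable_funM => //; exact: measurable_psi.
rewrite (Rexcept _ (measurable_funS measurableT (@subsetT _ _) mg) pw1) //.
rewrite RintegralZr //; last first.
  apply: int_psi => // z /=; rewrite !in_itv /= => /andP[-> zk] /=.
  exact: le_trans zk kx1.
rewrite int_psi_K //; last exact: kk_mono.
have pw2 : {in (`]kx, 1]%classic : set R), (fun s => psi t s * psi x s) =1
    (fun s => t / x * (psi x s * psi x s))}.
  move=> s; rewrite inE /= in_itv /= => /andP[kxs _].
  by rewrite (psi_tail t0 tx xp kxs) mulrA.
have -> : \int[mu]_(s in `]kx, 1]) (psi t s * psi x s) =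
    \int[mu]_(s in `]kx, 1]) (t / x * (psi x s * psi x s)) by apply: eq_Rintegral.
rewrite RintegralZl //; last first.
  apply: int_psipsi => // z /=; rewrite !in_itv /= => /andP[kz ->].
  by rewrite (le_lt_trans kx0 kz).
rewrite /Lx -/kx; field; rewrite gt_eqF //.
Qed.


Lemma CC_sym x y : CC x y = CC y x.
Proof. by rewrite /CC; apply: eq_Rintegral => s _; rewrite mulrC. Qed.

Lemma CC_u0 u : 0 <= u <= 1 -> CC u 0 = 0.
Proof.
move=> hu; rewrite /CC (@eq_Rintegral _ _ _ mu _ (fun=> 0)); first by rewrite Rint_cst // mul0r.
by move=> s; rewrite inE /= in_itv /= => /andP[sp _]; rewrite psi0 // mulr0.
Qed.

Lemma CC_u1 u : 0 <= u <= 1 -> CC u 1 = u.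
Proof.
move=> hu; rewrite /CC.
have pw : forall s, (`]0, 1]%classic : set R) s -> s \notin [:: 1] ->
    psi u s * psi 1 s = psi u s.
  move=> s /=; rewrite in_itv /= => /andP[sp s1].
  rewrite in_cons in_nil orbF => s1'.
  by rewrite psi1 ?mulr1 // sp lt_neqAle s1' s1.
rewrite (Rexcept _ (measurable_funS measurableT (@subsetT _ _) (measurable_psi u)) pw) //.
by rewrite int_psi_K ?kk_le1 // powR1 mulr1.
Qed.

Lemma CC_rect u1 u2 v1 v2 : 0 <= u1 -> u1 <= u2 -> u2 <= 1 ->
  0 <= v1 -> v1 <= v2 -> v2 <= 1 ->
  0 <= CC u2 v2 - CC u2 v1 - CC u1 v2 + CC u1 v1.
Proof.
move=> u10 u12 u21 v10 v12 v21.
have hu1 : 0 <= u1 <= 1 by rewrite u10 (le_trans u12 u21).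
have hu2 : 0 <= u2 <= 1 by rewrite (le_trans u10 u12) u21.
have hv1 : 0 <= v1 <= 1 by rewrite v10 (le_trans v12 v21).
have hv2 : 0 <= v2 <= 1 by rewrite (le_trans v10 v12) v21.
have sub : (`]0, 1]%classic : set R) `<=` `]0, 1] by [].
have mP : forall x y, measurable_fun setT (fun s => psi x s * psi y s).
  by move=> x y; apply: measurable_funM; apply: measurable_psi.
have b01 : forall x y s, 0 <= x <= 1 -> 0 <= y <= 1 -> 0 < s ->
    0 <= psi x s * psi y s <= 1.
  move=> x y s hx hy sp; have [x0 _] := andP hx; have [y0 _] := andP hy.
  rewrite mulr_ge0 ?psi_ge0 //= -(mulr1 1).
  by apply: ler_pM; rewrite ?psi_ge0 ?psi_le1.
rewrite /CC -RintegralB //; try by apply: int_psipsi.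
rewrite -RintegralB //; last by apply: int_psipsi.
  rewrite -RintegralD //; last by apply: int_psipsi.
    apply: Rintegral_ge0 => s /=; rewrite in_itv /= => /andP[sp _].
    have m1 := psi_mono u10 u12 u21 sp.
    have m2 := psi_mono v10 v12 v21 sp.
    have -> : psi u2 s * psi v2 s - psi u2 s * psi v1 s - psi u1 s * psi v2 s +
      psi u1 s * psi v1 s = (psi u2 s - psi u1 s) * (psi v2 s - psi v1 s) by ring.
    by apply: mulr_ge0; rewrite subr_ge0.
  apply: (int_bndM (M := 3)) => //.
    by apply: measurable_funB; [apply: measurable_funB|]; apply: mP.
  move=> s /=; rewrite in_itv /= => /andP[sp _].
  have := b01 _ _ _ hu2 hv2 sp; have := b01 _ _ _ hu2 hv1 sp.
  have := b01 _ _ _ hu1 hv2 sp.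
  move=> /andP[? ?] /andP[? ?] /andP[? ?]; rewrite ler_norml; apply/andP; split; lra.
apply: (int_bndM (M := 2)) => //.
  by apply: measurable_funB; apply: mP.
move=> s /=; rewrite in_itv /= => /andP[sp _].
have := b01 _ _ _ hu2 hv2 sp; have := b01 _ _ _ hu2 hv1 sp.
move=> /andP[? ?] /andP[? ?]; rewrite ler_norml; apply/andP; split; lra.
Qed.

End S.

Theorem mainTheorem5 (R : realType) (a b : R) :
  0 <= a <= 1 -> 0 <= b <= 1 ->
  is_copula (star (MO b a) (MO a b)) /\
  lower_semilinear (star (MO b a) (MO a b)).
Proof.
move=> ha hb; split.
  split.
  - move=> u hu; rewrite !star_eq //; last by rewrite lexx ler01.
    2: by rewrite lexx ler01.
    by rewrite CC_u0 // CC_sym CC_u0.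
  - move=> u hu; rewrite !star_eq //; last by rewrite ler01 lexx.
    2: by rewrite ler01 lexx.
    by rewrite CC_u1 // CC_sym CC_u1.
  - move=> u1 u2 v1 v2 hu1 hu2 hv1 hv2 u12 v12.
    rewrite !star_eq //.
    have [u10 _] := andP hu1; have [_ u21] := andP hu2.
    have [v10 _] := andP hv1; have [_ v21] := andP hv2.
    exact: CC_rect.
move=> x /andP[xp x1]; split.
  exists (Lx a b x), 0 => t /andP[t0 tx].
  have ht : 0 <= t <= 1 by rewrite t0 (le_trans tx x1).
  by rewrite star_eq // ?(ltW xp) // CC_lin // addr0 mulrC.
exists (Lx a b x), 0 => t /andP[t0 tx].
have ht : 0 <= t <= 1 by rewrite t0 (le_trans tx x1).
by rewrite star_eq // ?(ltW xp) // CC_sym CC_lin // addr0 mulrC.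
Qed.
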